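(* Let $N=\{1,\dots,n\}$, let $w:2^N\to\mathbb{R}$ be the characteristic function of the data sharing game (with $w(\emptyset)=0$), let $\epsilon\ge 0$, and let $(\pi_0,\pi_1,\dots,\pi_n)$ be any vector in the strong $\epsilon$-core $$\mathrm{Core}_\epsilon(N)=\Big\{(\pi_0,\dots,\pi_n)\in\mathbb{R}^{n+1}_{+}:\ \sum_{i\in N}\pi_i+\pi_0=w(N),\ \sum_{i\in S}\pi_i+\pi_0\ge w(S)-\epsilon\ \text{for all } S\in 2^N\setminus\{\emptyset\}\Big\}.$$ Then for every $i\in N$, $\pi_i\le \pi_i^{VCG}+\epsilon$, where $\pi_i^{VCG}=w(N)-w(N\setminus\{i\})$.
   Context: Data sharing game: participants $N=\{1,\dots,n\}$ with (input) datasets $\hat D_i$, and a server $0$ with budget $b_0$. $F$ maps a collection of datasets to a global model, $A$ is an accuracy metric, $h_i=k_iA$ with $k_i>0$, and $v_i(M,\hat D_i)=\mathbb{E}[\max\{h_i(M)-h_i(F(\hat D_i)),0\}]$. The characteristic function is $w(S)=\sum_{i\in S}v_i(F(\hat D_S),\hat D_i)+b_0$ for nonempty $S\subseteq N$ (where $\hat D_S=\{\hat D_i\}_{i\in S}$) and $w(\emptyset)=0$. $\pi_i^{VCG}$ is called the VCG surplus of participant $i$. *)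

(* Defs.v *)
From mathcomp Require Import all_boot all_order all_algebra.
Set Implicit Arguments. Unset Strict Implicit. Unset Printing Implicit Defensive.
Import Order.TTheory GRing.Theory Num.Theory.
Local Open Scope ring_scope.

(* Participants N = {1..n} are represented by 'I_n; the server 0 is separate.
   Data sharing game characteristic function:
     w(S) = sum_{i in S} v_i(F(D_S), D_i) + b0   (S nonempty),  w(emptyset) = 0.
   [F S] stands for the global model F(\hat D_S) trained on the datasets of S,
   and [v i M] stands for v_i(M, \hat D_i) (an expected accuracy gain). *)
Definition dsg_w (R : numDomainType) (n : nat) (Model : Type)
  (F : {set 'I_n} -> Model) (v : 'I_n -> Model -> R) (b0 : R)
  (S : {set 'I_n}) : R :=
  if S == set0 then 0 else \sum_(i in S) v i (F S) + b0.

Definition strong_eps_core (R : numDomainType) (n : nat)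
  (w : {set 'I_n} -> R) (eps : R) (pi0 : R) (pi : 'I_n -> R) : Prop :=
  [/\ 0 <= pi0, (forall i, 0 <= pi i),
      \sum_(i in [set: 'I_n]) pi i + pi0 = w [set: 'I_n] &
      (forall S : {set 'I_n}, S != set0 -> \sum_(i in S) pi i + pi0 >= w S - eps)].

Definition vcg_surplus (R : numDomainType) (n : nat)
  (w : {set 'I_n} -> R) (i : 'I_n) : R :=
  w [set: 'I_n] - w ([set: 'I_n] :\ i).

(* Main.v *)
Require Import Defs.
From mathcomp Require Import all_boot all_order all_algebra.
Import Order.TTheory GRing.Theory Num.Theory.
From mathcomp Require Import lra.
Local Open Scope ring_scope.

Lemma keyL (R : realFieldType) (eps pi0 a b c p : R) : 0 <= pi0 -> c - eps <= b + pi0 -> p + b + pi0 = a -> p <= a - c + eps.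
Proof. move=> *; lra. Qed.
Lemma key0L (R : realFieldType) (eps pi0 : R) : 0 <= eps -> forall a b p : R, 0 <= pi0 -> 0 <= b -> p + b + pi0 = a -> p <= a - 0 + eps.
Proof. move=> *; lra. Qed.

Theorem lemma1 (R : realFieldType) (n : nat) (Model : Type)
  (F : {set 'I_n} -> Model) (v : 'I_n -> Model -> R) (b0 : R)
  (eps : R) (pi0 : R) (pi : 'I_n -> R) :
  0 <= eps ->
  strong_eps_core (dsg_w F v b0) eps pi0 pi ->
  forall i : 'I_n, pi i <= vcg_surplus (dsg_w F v b0) i + eps.
Proof.
move=> he [h0 hpos heff hcore] i.
have hsplit : \sum_(j in [set: 'I_n]) pi j
    = pi i + \sum_(j in [set: 'I_n] :\ i) pi j.
  rewrite (bigD1 i) ?in_setT //=; congr (_ + _).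
  by apply: eq_bigl => j; rewrite in_setD1 in_setT andbT.
have hS0 : 0 <= \sum_(j in [set: 'I_n] :\ i) pi j by apply: sumr_ge0.
move: heff; rewrite hsplit => heff.
have key := @keyL R eps pi0.
have key0 := @key0L R eps pi0 he.
rewrite /vcg_surplus.
case: (eqVneq ([set: 'I_n] :\ i) set0) => hE.
  have -> : dsg_w F v b0 ([set: 'I_n] :\ i) = 0 by rewrite /dsg_w hE eqxx.
  by apply: key0 h0 hS0 heff.
by apply: key h0 (hcore _ hE) heff.
Qed.
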